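(* Let $\Omega\subset\mathbb{R}^n$ be a bounded, strictly convex domain, $\Lambda\ge1$, $K<\infty$, and let $v\in C(\overline\Omega)$ satisfy $M_\Lambda^-(D^2v)\le K$ in $\Omega$ in the viscosity sense. Suppose a paraboloid $P$ of opening $-a<0$ is tangent from below to $\Gamma^0_v$ in $\Omega$ at a point $x_0\in\Omega\setminus A_0(v)$, and suppose that for some $t>0$ the paraboloid $P+t$ is tangent from below to $v$ in $\Omega$ at a point $x_1\in\overline\Omega$ (i.e. $P+t\le v$ on $\overline\Omega$ and $P(x_1)+t=v(x_1)$). Then $x_1\in\overline\Omega\setminus A_0(v)$.
   Context: For a symmetric $n\times n$ matrix $N$, $M_\Lambda^-(N) := (\text{sum of positive eigenvalues of }N) + \Lambda\,(\text{sum of negative eigenvalues of }N)$. For $u,\varphi\in C(\overline\Omega)$, $\varphi$ is tangent from below to $u$ in $\Omega$ at $x_0$ if $\varphi\le u$ in $\overline\Omega$ and $\varphi(x_0)=u(x_0)$. $M_\Lambda^-(D^2v)\le K$ in the viscosity sense in $\Omega$ means $M_\Lambda^-(D^2\varphi(x_0))\le K$ whenever $\varphi\in C^2(\overline\Omega)$ is tangent from below to $v$ in $\Omega$ at $x_0\in\Omega$. A paraboloid of opening $a$ is a function $P^a_{y,b}(x)=\frac a2|x|^2+y\cdot x+b$ with $y\in\mathbb{R}^n$, $b\in\mathbb{R}$. For $a\ge 0$, the $a$-convex envelope of $v$ is $\Gamma^a_v(x):=\sup\{P^{-a}_{y,b}(x): y\in\mathbb{R}^n,\ b\in\mathbb{R},\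 P^{-a}_{y,b}\le v\text{ in }\overline\Omega\}$ for $x\in\overline\Omega$ (so $\Gamma^0_v$ is the convex envelope), and $A_a(v):=\{x\in\Omega: v(x)=\Gamma^a_v(x)\}$. *)

(* Defs.v *)
(* R^n is modelled as 'rV[R]_n. *)
From HB Require Import structures.
From mathcomp Require Import all_boot all_order all_algebra.
From mathcomp Require Import all_classical all_reals all_analysis.
Set Implicit Arguments. Unset Strict Implicit. Unset Printing Implicit Defensive.
Import Order.TTheory GRing.Theory Num.Theory.
Import numFieldNormedType.Exports.
Local Open Scope classical_set_scope.
Local Open Scope ring_scope.

Definition evec {R : realType} {n : nat} (i : 'I_n) : 'rV[R]_n := delta_mx 0 i.

Definition dotv {R : realType} {n : nat} (y x : 'rV[R]_n) : R :=
  \sum_(i < n) y 0 i * x 0 i.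
Definition sqnorm {R : realType} {n : nat} (x : 'rV[R]_n) : R :=
  \sum_(i < n) x 0 i ^+ 2.

Definition parab {R : realType} {n : nat} (a : R) (y : 'rV[R]_n) (b : R)
  (x : 'rV[R]_n) : R := a / 2 * sqnorm x + dotv y x + b.

Definition pderiv {R : realType} {n : nat} (f : 'rV[R]_n -> R) (i : 'I_n) :
  'rV[R]_n -> R := fun x => 'D_(evec i) f x.

Definition hessian {R : realType} {n : nat} (f : 'rV[R]_n -> R) (x : 'rV[R]_n)
  : 'M[R]_n := \matrix_(i < n, j < n) pderiv (pderiv f j) i x.

Definition cont_ext_closure {R : realType} {n : nat} (Om : set 'rV[R]_n)
  (g : 'rV[R]_n -> R) : Prop :=
  exists h : 'rV[R]_n -> R,
    {within closure Om, continuous h} /\ (forall x, Om x -> h x = g x).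

Definition C2_closure {R : realType} {n : nat} (Om : set 'rV[R]_n)
  (phi : 'rV[R]_n -> R) : Prop :=
  [/\ {within closure Om, continuous phi},
      (forall i x, Om x -> derivable phi x (evec i)),
      (forall i j x, Om x -> derivable (pderiv phi j) x (evec i)),
      (forall i, {within Om, continuous (pderiv phi i)} /\
                 cont_ext_closure Om (pderiv phi i)) &
      (forall i j, {within Om, continuous (pderiv (pderiv phi j) i)} /\
                   cont_ext_closure Om (pderiv (pderiv phi j) i))].

Definition bounded_set {R : realType} {n : nat} (Om : set 'rV[R]_n) : Prop :=
  exists M : R, forall x, Om x -> sqnorm x <= M.
Definition strictly_convex {R : realType} {n : nat} (Om : set 'rV[R]_n) : Prop :=
  forall x y (t : R), closure Om x -> closure Om y -> x != y ->
    0 < t < 1 -> Om ((1 - t) *: x + t *: y).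
Definition bounded_strictly_convex_domain {R : realType} {n : nat}
  (Om : set 'rV[R]_n) : Prop :=
  [/\ Om !=set0, open Om, connected Om, bounded_set Om & strictly_convex Om].

(* M^-_Lambda evaluated on a list s of eigenvalues (with multiplicity) *)
Definition MLminus_seq {R : realType} (L : R) (s : seq R) : R :=
  \sum_(e <- s | 0 < e) e + L * \sum_(e <- s | e < 0) e.

(* M^-_Lambda(N) <= K: for the eigenvalues of N (roots of the characteristic
   polynomial, listed with multiplicity), the quantity is <= K *)
Definition MLminus_le {R : realType} {n : nat} (L : R) (N : 'M[R]_n) (K : R)
  : Prop :=
  forall s : seq R, char_poly N = \prod_(e <- s) ('X - e%:P) ->
    MLminus_seq L s <= K.

Definition tangent_below {R : realType} {n : nat} (Om : set 'rV[R]_n)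
  (phi u : 'rV[R]_n -> R) (x0 : 'rV[R]_n) : Prop :=
  (forall x, closure Om x -> phi x <= u x) /\ phi x0 = u x0.

Definition visc_MLminus_le {R : realType} {n : nat} (Om : set 'rV[R]_n)
  (L K : R) (v : 'rV[R]_n -> R) : Prop :=
  forall (phi : 'rV[R]_n -> R) (x0 : 'rV[R]_n),
    C2_closure Om phi -> Om x0 -> tangent_below Om phi v x0 ->
    MLminus_le L (hessian phi x0) K.

Definition Gamma_env {R : realType} {n : nat} (Om : set 'rV[R]_n) (a : R)
  (v : 'rV[R]_n -> R) (x : 'rV[R]_n) : R :=
  sup [set r : R | exists (y : 'rV[R]_n) (b : R),
         (forall z, closure Om z -> parab (- a) y b z <= v z) /\
         r = parab (- a) y b x].

Definition contact_set {R : realType} {n : nat} (Om : set 'rV[R]_n) (a : R)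
  (v : 'rV[R]_n -> R) : set 'rV[R]_n :=
  [set x | Om x /\ v x = Gamma_env Om a v x].

(* Main.v *)
Require Import Defs.
From HB Require Import structures.
From mathcomp Require Import all_boot all_order all_algebra.
From mathcomp Require Import all_classical all_reals all_analysis.
From mathcomp Require Import ring lra.
Set Implicit Arguments. Unset Strict Implicit. Unset Printing Implicit Defensive.
Import Order.TTheory GRing.Theory Num.Theory.
Import numFieldNormedType.Exports.
Local Open Scope classical_set_scope.
Local Open Scope ring_scope.

Section S.
Variables (R : realType) (n : nat).
Implicit Types (x y z e : 'rV[R]_n).

Lemma deriv_poly (f : 'rV[R]_n -> R) z e p1 q1 q2 q3 :
  (forall r, f (r *: e + z) = f z + r * p1 + r^+2 * (q1 + r * (q2 + r * q3))) ->
  derivable f z e /\ derive f z e = p1.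
Proof.
move=> H.
set k := fun r : R => p1 + r * (q1 + r * (q2 + r * q3)).
have kc : k r @[r --> (0:R)^'] --> p1.
  have -> : p1 = k 0 by rewrite /k mul0r addr0.
  apply/continuous_withinNx.
  apply: continuousD; first exact: cvg_cst.
  apply: continuousM; first exact: cvg_id.
  apply: continuousD; first exact: cvg_cst.
  apply: continuousM; first exact: cvg_id.
  apply: continuousD; first exact: cvg_cst.
  apply: continuousM; first exact: cvg_id.
  exact: cvg_cst.
have eqk : {near (0:R)^', k =1 (fun h => h^-1 *: ((f \o shift z) (h *: e) - f z))}.
  near=> h; symmetry.
  have h0 : h != 0 by near: h; exact: nbhs_dnbhs_neq.
  rewrite /= /shift H /k.
  rewrite -[_ *: _]/(_ * _).
  by field.
have cv : (fun h => h^-1 *: ((f \o shift z) (h *: e) - f z)) @ (0:R)^' --> p1.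
  exact: cvg_trans (near_eq_cvg eqk) kc.
split; first by apply/cvg_ex; exists p1.
exact: cvg_lim.
Unshelve. all: by end_near.
Qed.
Lemma dotvDr y u w : dotv y (u + w) = dotv y u + dotv y w.
Proof. by rewrite /dotv -big_split; apply: eq_bigr => i _; rewrite mxE mulrDr. Qed.
Lemma dotvZr y (r : R) u : dotv y (r *: u) = r * dotv y u.
Proof. by rewrite /dotv mulr_sumr; apply: eq_bigr => i _; rewrite mxE mulrCA. Qed.
Lemma dotvNr y u : dotv y (- u) = - dotv y u.
Proof. by rewrite /dotv -sumrN; apply: eq_bigr => i _; rewrite mxE mulrN. Qed.
Lemma dotvBr y u w : dotv y (u - w) = dotv y u - dotv y w.
Proof. by rewrite dotvDr dotvNr. Qed.
Lemma dotvC y u : dotv y u = dotv u y.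
Proof. by apply: eq_bigr => i _; rewrite mulrC. Qed.
Lemma dotvDl y u w : dotv (u + w) y = dotv u y + dotv w y.
Proof. by rewrite dotvC dotvDr !(dotvC y). Qed.
Lemma dotvZl y (r : R) u : dotv (r *: u) y = r * dotv u y.
Proof. by rewrite dotvC dotvZr dotvC. Qed.
Lemma dotvBl y u w : dotv (u - w) y = dotv u y - dotv w y.
Proof. by rewrite dotvC dotvBr !(dotvC y). Qed.
Lemma dotv0r y : dotv y 0 = 0.
Proof. by rewrite /dotv big1 // => i _; rewrite mxE mulr0. Qed.
Lemma sqnormE x : sqnorm x = dotv x x.
Proof. by apply: eq_bigr => i _; rewrite expr2. Qed.
Lemma sqnorm_ge0 x : 0 <= sqnorm x.
Proof. by apply: sumr_ge0 => i _; exact: sqr_ge0. Qed.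
Lemma dotv_evec y (j : 'I_n) : dotv y (evec j) = y 0 j.
Proof.
rewrite /dotv (bigD1 j) //= big1 ?addr0.
  by rewrite /evec mxE !eqxx mulr1.
by move=> i ij; rewrite /evec mxE (negbTE ij) andbF mulr0.
Qed.
Lemma sqnorm_sum_ge y : sqnorm y = 0 -> y = 0.
Proof.
move=> H; apply/rowP => i; rewrite mxE.
have : y 0 i ^+ 2 = 0.
  apply/eqP; rewrite eq_le sqr_ge0 andbT -H /sqnorm (bigD1 i) //= lerDl.
  by apply: sumr_ge0 => k _; exact: sqr_ge0.
by move/eqP; rewrite sqrf_eq0 => /eqP.
Qed.

Lemma cont_sum (F : 'I_n -> 'rV[R]_n -> R) :
  (forall i, continuous (F i)) -> continuous (fun z => \sum_i F i z).
Proof.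
move=> Fc; rewrite -fct_sumE; apply: (big_ind (fun g : 'rV[R]_n -> R => continuous g)).
- exact: cst_continuous.
- by move=> f g fc gc x; apply: continuousD; [exact: fc | exact: gc].
- by move=> i _; exact: Fc.
Qed.

Lemma cont_coord (i : 'I_n) : continuous (fun z : 'rV[R]_n => z 0 i).
Proof. exact: coord_continuous. Qed.

Lemma cont_dot u : continuous (fun z => dotv u z).
Proof.
apply: cont_sum => i x; apply: continuousM; first exact: cst_continuous.
exact: cont_coord.
Qed.

Lemma cont_sqnorm : continuous (fun z : 'rV[R]_n => sqnorm z).
Proof.
apply: cont_sum => i x; rewrite /GRing.exp /=.
by apply: continuousM; apply: cont_coord.
Qed.

Lemma cD (f g : 'rV[R]_n -> R) : continuous f -> continuous g -> continuous (fun z => f z + g z).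
Proof. by move=> fc gc x; exact: (continuousD (fc x) (gc x)). Qed.
Lemma cB (f g : 'rV[R]_n -> R) : continuous f -> continuous g -> continuous (fun z => f z - g z).
Proof. by move=> fc gc x; exact: (continuousB (fc x) (gc x)). Qed.
Lemma cM (f g : 'rV[R]_n -> R) : continuous f -> continuous g -> continuous (fun z => f z * g z).
Proof. by move=> fc gc x; exact: (continuousM (fc x) (gc x)). Qed.
Lemma cC (k : R) : continuous (fun _ : 'rV[R]_n => k).
Proof. exact: cst_continuous. Qed.

Lemma cont_pow (f : 'rV[R]_n -> R) k : continuous f -> continuous (fun z => f z ^+ k).
Proof.
move=> fc; elim: k => [|k IH].
  by under eq_fun do rewrite expr0; exact: cC.
by under eq_fun do rewrite exprS; exact: cM.
Qed.

Lemma cont_sh u x1 : continuous (fun z => dotv u (z - x1)).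
Proof.
under eq_fun do rewrite dotvBr.
by apply: cB; [exact: cont_dot | exact: cC].
Qed.

Lemma cont_sqsh x1 : continuous (fun z => sqnorm (z - x1)).
Proof.
apply: cont_sum => i; under eq_fun do rewrite !mxE.
by apply: cont_pow; apply: cB; [exact: cont_coord|exact: cC].
Qed.

Lemma cont_coordsh x1 j : continuous (fun z : 'rV[R]_n => (z - x1) 0 j).
Proof.
under eq_fun do rewrite !mxE.
by apply: cB; [exact: cont_coord|exact: cC].
Qed.

Variables (x1 m w : 'rV[R]_n) (V1 c a : R).
Definition sf z := dotv w (z - x1).
Definition phi z := V1 + dotv m (z - x1) + c * sf z ^+ 2 - c ^+ 3 * sf z ^+ 4
   - a / 2 * sqnorm (z - x1).
Definition psi (j : 'I_n) z := m 0 j + 2 * c * sf z * w 0 j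
   - 4 * c ^+ 3 * sf z ^+ 3 * w 0 j - a * (z - x1) 0 j.
Definition chi (i j : 'I_n) z := 2 * c * w 0 i * w 0 j
   - 12 * c ^+ 3 * sf z ^+ 2 * w 0 i * w 0 j - a * (j == i)%:R.

Lemma sf_shift r e z : sf (r *: e + z) = sf z + r * dotv w e.
Proof. rewrite /sf -addrA (dotvDr w (r *: e)) dotvZr; exact: addrC. Qed.

Lemma sq_shift r e z : sqnorm (r *: e + z - x1) =
  sqnorm (z - x1) + 2 * r * dotv (z - x1) e + r ^+ 2 * sqnorm e.
Proof.
rewrite -addrA; move: (z - x1) => h.
rewrite !sqnormE dotvDl !dotvDr !dotvZl !dotvZr (dotvC e h); ring.
Qed.

Lemma phi_deriv z e : derivable phi z e /\
  derive phi z e = dotv m e + 2 * c * sf z * dotv w e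
     - 4 * c ^+ 3 * sf z ^+ 3 * dotv w e - a * dotv (z - x1) e.
Proof.
apply: (deriv_poly (q1 := c * dotv w e ^+ 2 - 6 * c ^+ 3 * sf z ^+ 2 * dotv w e ^+ 2
    - a / 2 * sqnorm e) (q2 := - 4 * c ^+ 3 * sf z * dotv w e ^+ 3)
    (q3 := - c ^+ 3 * dotv w e ^+ 4)) => r.
rewrite /phi !sf_shift sq_shift -[r *: e + z - x1]addrA (dotvDr m (r *: e)) dotvZr.
by field.
Qed.

Lemma pderiv_phi j : pderiv phi j = psi j.
Proof.
apply/funext => z; rewrite /pderiv (phi_deriv z (evec j)).2.
by rewrite /psi !dotv_evec.
Qed.

Lemma evec_entry (i j : 'I_n) : (evec i : 'rV[R]_n) 0 j = (j == i)%:R.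
Proof. by rewrite /evec mxE eqxx. Qed.

Lemma psi_deriv i j z : derivable (psi j) z (evec i) /\
  derive (psi j) z (evec i) = chi i j z.
Proof.
apply: (deriv_poly (q1 := - 12 * c ^+ 3 * sf z * w 0 i ^+ 2 * w 0 j)
    (q2 := - 4 * c ^+ 3 * w 0 i ^+ 3 * w 0 j) (q3 := 0)) => r.
rewrite /psi /chi sf_shift dotv_evec.
rewrite !mxE eqxx /=; move: ((j == i)%:R) (sf z) (m 0 j) (w 0 i) (w 0 j) (z 0 j) (x1 0 j) => d s M1 W1 W2 Z1 X1. ring.



Qed.

Lemma pderiv_psi i j : pderiv (psi j) i = chi i j.
Proof. by apply/funext => z; rewrite /pderiv (psi_deriv i j z).2. Qed.

Lemma cont_sf : continuous sf.
Proof. exact: cont_sh. Qed.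

Lemma phi_cont : continuous phi.
Proof.
rewrite /phi.
apply: cB; last by apply: cM; [exact: cC | exact: cont_sqsh].
apply: cB; last by apply: cM; [exact: cC | apply: cont_pow; exact: cont_sf].
apply: cD; last by apply: cM; [exact: cC | apply: cont_pow; exact: cont_sf].
by apply: cD; [exact: cC | exact: cont_sh].
Qed.

Lemma psi_cont j : continuous (psi j).
Proof.
rewrite /psi.
apply: cB; last by apply: cM; [exact: cC | exact: cont_coordsh].
apply: cB; last by apply: cM; [|exact: cC]; apply: cM; [exact: cC | apply: cont_pow; exact: cont_sf].
apply: cD; first exact: cC.
by apply: cM; [|exact: cC]; apply: cM; [exact: cC | exact: cont_sf].
Qed.

Lemma chi_cont i j : continuous (chi i j).
Proof.
rewrite /chi.
apply: cB; last exact: cC.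
apply: cB; first exact: cC.
apply: cM; last exact: cC.
apply: cM; last exact: cC.
by apply: cM; [exact: cC | apply: cont_pow; exact: cont_sf].
Qed.
End S.

Lemma det_rank1 (A : idomainType) m (C : A) (u : 'cV[A]_m) (v : 'rV[A]_m) :
  \det (C%:M - u *m v) * C = C ^+ m * (C - (v *m u) 0 0).
Proof.
set M := block_mx (1%:M : 'M[A]_1) v u (C%:M).
have E1 : M = block_mx 1%:M 0 u 1%:M *m block_mx 1%:M v 0 (C%:M - u *m v).
  rewrite mulmx_block !mul1mx !mul0mx ?mulmx0 !mulmx1 ?addr0 ?add0r.
  by rewrite (addrC (u *m v)) subrK.
have E2 : M *m block_mx (C%:M : 'M[A]_1) 0 (- u) 1%:M =
          block_mx (C%:M - v *m u) v 0 (C%:M).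
  rewrite mulmx_block !mul1mx ?mulmx0 !mulmx1 ?add0r ?addr0.
  rewrite !mulmxN mul_mx_scalar mul_scalar_mx subrr.
  by rewrite addrC.
have := congr1 determinant E2.
rewrite detM (@det_lblock _ 1 m) (@det_ublock _ 1 m) E1 detM (@det_lblock _ 1 m) (@det_ublock _ 1 m) !det1 !mul1r.
rewrite !det_scalar !det_mx11 !mxE eqxx mulr1n expr1 mulr1 => ->.
by rewrite mulrC.
Qed.

Lemma char_poly_r1 (R : realType) n' (w : 'rV[R]_n'.+1) (c a : R) :
  char_poly (\matrix_(i, j) (c * w 0 i * w 0 j - a * (i == j)%:R)) =
  ('X - (c * sqnorm w - a)%:P) * ('X + a%:P) ^+ n'.
Proof.
set C : {poly R} := 'X + a%:P.
set u : 'cV[{poly R}]_n'.+1 := \col_i (c * w 0 i)%:P.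
set v : 'rV[{poly R}]_n'.+1 := \row_j (w 0 j)%:P.
have E : char_poly_mx (\matrix_(i, j) (c * w 0 i * w 0 j - a * (i == j)%:R)) =
         C%:M - u *m v.
  apply/matrixP => i j; rewrite !mxE big_ord1 !mxE.
  case: (eqVneq i j) => [->|ij].
    by rewrite ?eqxx /= !mulr1n mulr1 rmorphB !rmorphM /C /=; ring.
  by rewrite /= !mulr0n mulr0 subr0 !rmorphM /=; ring.
have Ck : (v *m u) 0 0 = (c * sqnorm w)%:P.
  rewrite !mxE /sqnorm mulr_sumr rmorph_sum; apply: eq_bigr => i _.
  by rewrite !mxE -polyCM; congr (_%:P); ring.
have C0 : C != 0 by rewrite /C monic_neq0 // monicXaddC.
apply: (mulIf C0).
rewrite /char_poly E det_rank1 Ck exprS.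
rewrite /C polyCB; ring.
Qed.

Lemma MLseq_val (R : realType) (L mu a : R) n' : 0 < mu -> 0 < a ->
  MLminus_seq L (mu :: nseq n' (- a)) = mu - L * (n'%:R * a).
Proof.
move=> mu0 a0.
have H1 : \sum_(j <- nseq n' (- a) | 0 < j) j = 0.
  elim: n' => [|k IH]; first by rewrite big_nil.
  by rewrite /= big_cons oppr_gt0 ltNge (ltW a0) /= IH.
have H2 : \sum_(j <- nseq n' (- a) | j < 0) j = - (n'%:R * a).
  elim: n' {H1} => [|k IH]; first by rewrite big_nil mul0r oppr0.
  by rewrite /= big_cons oppr_lt0 a0 /= IH mulrSr; ring.
rewrite /MLminus_seq !big_cons mu0 ltNge (ltW mu0) /= H1 H2; ring.
Qed.

Section S2.
Variables (R : realType) (n : nat).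

Lemma evec_norm (i : 'I_n) : `|evec i : 'rV[R]_n| <= 1.
Proof.
rewrite [leLHS]/Num.norm /= mx_normrE.
apply: bigmax_le => // -[a b] _ /=.
rewrite /evec mxE; case: (_ && _) => /=; by rewrite ?normr1 ?normr0.
Qed.

Lemma ball_pts (Om : set 'rV[R]_n) x1 : open Om -> Om x1 ->
  exists2 rho : R, 0 < rho &
    forall i, Om (x1 + rho *: evec i) /\ Om (x1 - rho *: evec i).
Proof.
rewrite openE => oOm Ox1.
have /nbhs_ballP [e e0 sub] : nbhs x1 Om by exact: oOm.
exists (e / 2); first by rewrite divr_gt0.
have key : forall z : 'rV[R]_n, `|z| <= e / 2 -> Om (x1 + z).
  move=> z zle; apply: sub; rewrite -ball_normE /ball_ /=.
  rewrite opprD addrA subrr add0r normrN (le_lt_trans zle) //.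
  by rewrite ltr_pdivrMr // ltr_pMr // ltr1n.
move=> i; split; last rewrite -scaleNr; apply: key; rewrite normrZ ?normrN;
  rewrite (ger0_norm (ltW (divr_gt0 e0 (ltr0n _ 2)))) ?normrN;
  by rewrite -[leRHS]mulr1 ler_wpM2l ?evec_norm // ltW // divr_gt0.
Qed.

End S2.



Section S.
Variables (R : realType) (n : nat).
Lemma parab0 (y : 'rV[R]_n) b x : parab (- 0) y b x = dotv y x + b.
Proof. by rewrite /parab oppr0 mul0r mul0r add0r. Qed.

Lemma exists_support (Om : set 'rV[R]_n) (v : 'rV[R]_n -> R) x1 (b0 : R) :
  open Om -> Om x1 ->
  (forall z, closure Om z -> b0 <= v z) ->
  v x1 = Gamma_env Om 0 v x1 ->
  exists y1, forall z, closure Om z -> v x1 + dotv y1 (z - x1) <= v z.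
Proof.
move=> oOm Ox1 vb0 vG.
set E := [set r : R | exists (y : 'rV[R]_n) (b : R),
         (forall z, closure Om z -> parab (- 0) y b z <= v z) /\
         r = parab (- 0) y b x1].
have Ex1 : closure Om x1 by exact: subset_closure.
have hsE : has_sup E.
  split.
    exists b0, 0, b0; split; last by rewrite parab0 dotvC dotv0r add0r.
    by move=> z zc; rewrite parab0 dotvC dotv0r add0r; exact: vb0.
  by exists (v x1) => r [y [b [yb ->]]]; exact: yb.
have GE : Gamma_env Om 0 v x1 = sup E by [].
set B := fun d : R => [set u : 'rV[R]_n | forall z, closure Om z ->
            v x1 - d + dotv u (z - x1) <= v z].
have Bne : forall d, 0 < d -> B d !=set0.
  move=> d d0; have [r [y [b [yb ->]]] lt] := sup_adherent d0 hsE.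
  exists y => z zc; have := yb z zc; rewrite !parab0 -GE -vG in lt *.
  rewrite dotvBr; lra.
have Bmono : forall d d', d <= d' -> B d `<=` B d'.
  by move=> d d' dd' u Bu z zc; apply: le_trans (Bu z zc); lra.
have Bcl : forall d, closed (B d).
  move=> d p clp z zc.
  pose H := (fun u => dotv (z - x1) u) @^-1` [set r | r <= v z - v x1 + d].
  have Hcl : closed H.
    by apply: preimage_closed; [move=> u _; exact: cont_dot | exact: closed_le].
  have sBH : B d `<=` H.
    by move=> u Bu; have := Bu z zc; rewrite /H /= (dotvC (z - x1) u); lra.
  by have := closureS sBH clp; rewrite -(closure_id H).1 // /H /= (dotvC (z - x1) p); lra.
have [rho rho0 pts] := ball_pts oOm Ox1.
pose Ap (i : 'I_n) := v (x1 + rho *: evec i) - v x1 + 1.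
pose Am (i : 'I_n) := v (x1 - rho *: evec i) - v x1 + 1.
pose M := \sum_i (`|Ap i| + `|Am i|) / rho.
have Bbd : forall u, B 1 u -> forall i, `|u 0 i| <= M.
  move=> u Bu i.
  have [Pp Pm] := pts i.
  have h1 := Bu _ (subset_closure Pp).
  have h2 := Bu _ (subset_closure Pm).
  have e1 : x1 + rho *: evec i - x1 = rho *: evec i by rewrite addrAC subrr add0r.
  have e2 : x1 - rho *: evec i - x1 = (- rho) *: evec i
    by rewrite addrAC subrr add0r scaleNr.
  rewrite e1 dotvZr dotv_evec in h1.
  rewrite e2 dotvZr dotv_evec in h2.
  have hA : `|rho * u 0 i| <= `|Ap i| + `|Am i|.
    rewrite ler_norml; apply/andP; split.
      have := ler_norm (Am i); have := normr_ge0 (Ap i); rewrite /Am; lra.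
    have := ler_norm (Ap i); have := normr_ge0 (Am i); rewrite /Ap; lra.
  rewrite normrM (gtr0_norm rho0) in hA.
  apply: le_trans (_ : (`|Ap i| + `|Am i|) / rho <= M).
    by rewrite ler_pdivlMr // mulrC.
  rewrite /M (bigD1 i) //= lerDl; apply: sumr_ge0 => k _.
  by rewrite divr_ge0 ?addr_ge0 // ltW.
have Bcomp : compact (B 1).
  have box : compact [set u : 'rV[R]_n | forall i, u ord0 i \in `[- M, M]].
    apply: (@rV_compact _ _ (fun=> `[- M, M]%classic)).
    by move=> _; exact: segment_compact.
  apply: subclosed_compact (Bcl 1) box _ => u Bu i.
  by rewrite in_itv /= -ler_norml; exact: Bbd.
pose F := filter_from [set d : R | 0 < d] B.
have FF : ProperFilter F.
  apply: filter_from_proper; last by move=> d d0; exact: Bne.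
  apply: filter_from_filter; first by exists 1 => /=.
  move=> i j i0 j0; exists (Num.min i j); first by rewrite /= lt_min i0 j0.
  by move=> u Bu; split; apply: Bmono Bu; rewrite ge_min lexx ?orbT.
have FB1 : F (B 1) by exists 1 => //=.
have [p [B1p clp]] := Bcomp F FF FB1.
have Bp : forall d, 0 < d -> B d p.
  move=> d d0; apply: Bcl => C nC.
  by apply: (clp (B d) C) => //; exists d => //=.
exists p => z zc; apply/ler_addgt0Pr => d d0.
by have := Bp d d0 z zc; lra.
Qed.

Lemma g_le (c s : R) : 0 <= c -> c * s ^+ 2 - c ^+ 3 * s ^+ 4 <= `|s|.
Proof.
move=> c0.
have -> : s ^+ 2 = `|s| ^+ 2 by rewrite real_normK // num_real.
have -> : s ^+ 4 = `|s| ^+ 4 by rewrite -normrX ger0_norm // exprn_even_ge0.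
move: (normr_ge0 s); move: `|s| => u u0.
case: (leP (c * u) 1) => cu.
  have h1 : c * u ^+ 2 <= u by rewrite expr2 mulrA -[leRHS]mul1r ler_wpM2r.
  have h2 : 0 <= c ^+ 3 * u ^+ 4 by rewrite mulr_ge0 // exprn_ge0.
  lra.
have h3 : c * u ^+ 2 - c ^+ 3 * u ^+ 4 = c * u ^+ 2 * (1 - (c * u) ^+ 2) by ring.
rewrite h3; apply: (@le_trans _ _ 0) => //; apply: mulr_ge0_le0.
  by rewrite mulr_ge0 // exprn_ge0.
rewrite subr_le0 expr2; nra.
Qed.

Lemma closure_sq (Om : set 'rV[R]_n) M : (forall x, Om x -> sqnorm x <= M) ->
  forall z, closure Om z -> sqnorm z <= M.
Proof.
move=> H z zc.
pose Hs := (fun x : 'rV[R]_n => sqnorm x) @^-1` [set r | r <= M].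
have Hcl : closed Hs.
  by apply: preimage_closed; [move=> u _; exact: cont_sqnorm | exact: closed_le].
have sub : Om `<=` Hs by move=> x Ox; exact: H.
by have := closureS sub zc; rewrite -(closure_id Hs).1.
Qed.

Lemma dotv_lb (y z : 'rV[R]_n) : - (sqnorm y + sqnorm z) / 2 <= dotv y z.
Proof.
have := sqnorm_ge0 (y + z).
rewrite !sqnormE dotvDl !dotvDr (dotvC z y); lra.
Qed.

Lemma Gamma_ge (Om : set 'rV[R]_n) v x (y1 : 'rV[R]_n) b1 : closure Om x ->
  (forall z, closure Om z -> parab (- 0) y1 b1 z <= v z) ->
  parab (- 0) y1 b1 x <= Gamma_env Om 0 v x.
Proof.
move=> xc H; apply: ub_le_sup; last by exists y1, b1.
by exists (v x) => r [y [b [yb ->]]]; exact: yb.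
Qed.
End S.

Lemma prod_nseq (T : Type) (R : comRingType) (F : T -> R) k x :
  \prod_(e <- nseq k x) F e = F x ^+ k.
Proof.
elim: k => [|k IH]; first by rewrite big_nil expr0.
by rewrite /= big_cons IH exprS.
Qed.



Lemma visc_contra (R : realType) n (Om : set 'rV[R]_n) (L K a : R)
  (v : 'rV[R]_n -> R) (x1 m w : 'rV[R]_n) :
  Om x1 -> 1 <= L -> 0 < a -> w != 0 -> visc_MLminus_le Om L K v ->
  (forall c, 0 <= c -> forall z, closure Om z -> phi x1 m w (v x1) c a z <= v z) ->
  False.
Proof.
case: n => [|n'] in Om v x1 m w *.
  move=> _ _ _ /eqP wn0; exfalso; apply: wn0; apply/rowP => i; case: i => //.
move=> Ox1 L1 a0 wn0 visc Hphi.
have sw0 : 0 < sqnorm w.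
  rewrite lt_def sqnorm_ge0 andbT; apply/eqP => h.
  by move/eqP: wn0; apply; exact: sqnorm_sum_ge.
pose c := (`|K| + L * n'%:R * a + a + 1) / (2 * sqnorm w).
have c0 : 0 <= c.
  have L0 : 0 <= L by apply: le_trans L1.
  rewrite /c divr_ge0 // ?mulr_ge0 ?(ltW sw0) //.
  by rewrite !addr_ge0 // ?mulr_ge0 // ltW.
have c2 : 2 * c * sqnorm w = `|K| + L * n'%:R * a + a + 1.
  by rewrite /c; field; rewrite lt0r_neq0.
set f := phi x1 m w (v x1) c a.
have C2 : C2_closure Om f.
  split.
  - exact/continuous_subspaceT/phi_cont.
  - by move=> i x _; exact: (phi_deriv _ _ _ _ _ _ x (evec i)).1.
  - by move=> i j x _; rewrite pderiv_phi; exact: (psi_deriv _ _ _ _ _ i j x).1.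
  - move=> i; rewrite pderiv_phi; split; first exact/continuous_subspaceT/psi_cont.
    by exists (psi x1 m w c a i); split => //; exact/continuous_subspaceT/psi_cont.
  - move=> i j; rewrite pderiv_phi pderiv_psi; split; first exact/continuous_subspaceT/chi_cont.
    by exists (chi x1 w c a i j); split => //; exact/continuous_subspaceT/chi_cont.
have tb : tangent_below Om f v x1.
  split; first exact: Hphi.
  have sq0 : sqnorm (0 : 'rV[R]_n'.+1) = 0 by rewrite sqnormE dotv0r.
  rewrite /f /phi /sf subrr dotv0r sq0 !dotv0r mulr0; ring.
have := visc f x1 C2 Ox1 tb.
have Hm : hessian f x1 = \matrix_(i, j) ((2 * c) * w 0 i * w 0 j - a * (i == j)%:R).
  apply/matrixP => i j; rewrite !mxE /f pderiv_phi pderiv_psi /chi /sf subrr dotv0r (eq_sym j i).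
  by rewrite expr0n /= !mulr0 !mul0r subr0.
rewrite Hm => /(_ ((2 * c * sqnorm w - a) :: nseq n' (- a))).
rewrite char_poly_r1 big_cons prod_nseq rmorphN opprK => /(_ erefl).
have mu0 : 0 < 2 * c * sqnorm w - a.
  rewrite c2; have L0 : 0 <= L by apply: le_trans L1.
  have : 0 <= L * n'%:R * a by rewrite !mulr_ge0 // ltW.
  have := normr_ge0 K; lra.
rewrite MLseq_val // c2.
have := ler_norm K; lra.
Qed.

Unset Implicit Arguments.


Theorem lemma3p1 (R : realType) (n : nat) (Om : set 'rV[R]_n) (L K : R)
  (v : 'rV[R]_n -> R) (a : R) (y : 'rV[R]_n) (b : R) (x0 x1 : 'rV[R]_n) (t : R) :
  bounded_strictly_convex_domain Om ->
  1 <= L ->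
  {within closure Om, continuous v} ->
  visc_MLminus_le Om L K v ->
  0 < a ->
  Om x0 -> ~ contact_set Om 0 v x0 ->
  tangent_below Om (parab (- a) y b) (Gamma_env Om 0 v) x0 ->
  0 < t ->
  closure Om x1 ->
  tangent_below Om (fun x => parab (- a) y b x + t) v x1 ->
  closure Om x1 /\ ~ contact_set Om 0 v x1.
Proof.
move=> [Omne oOm cOm bOm scOm] L1 vc visc a0 Ox0 ncx0 [PG PGx0] t0 cx1 [Pv Pvx1].
split => //; move=> [Ox1 vGx1].
have [Mb bM] := bOm.
have clM := closure_sq bM.
pose b0 := - (a / 2 * Mb) - (sqnorm y + Mb) / 2 + b.
have vb0 : forall z, closure Om z -> b0 <= v z.
  move=> z zc; have := Pv z zc; have := clM z zc; have := dotv_lb y z.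
  have : a / 2 * sqnorm z <= a / 2 * Mb.
    by apply: ler_wpM2l; [rewrite divr_ge0 // ltW | exact: clM].
  rewrite /parab /b0.
  have -> : - a / 2 * sqnorm z = - (a / 2 * sqnorm z) by rewrite !mulNr.
  lra.
have [y1 Hy1] := exists_support oOm Ox1 vb0 vGx1.
pose pg := y - a *: x1.
have Pform : forall z, parab (- a) y b z + t =
    v x1 + dotv pg (z - x1) - a / 2 * sqnorm (z - x1).
  move=> z; rewrite -Pvx1 /parab /pg !sqnormE !(dotvBl, dotvBr, dotvZl, dotvZr).
  by rewrite (dotvC z x1); field.
pose w := 2^-1 *: (y1 - pg).
pose m := 2^-1 *: (y1 + pg).
have dw : forall h, dotv w h = 2^-1 * (dotv y1 h - dotv pg h).
  by move=> h; rewrite /w dotvZl dotvBl.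
have dm : forall h, dotv m h = 2^-1 * (dotv y1 h + dotv pg h).
  by move=> h; rewrite /m dotvZl dotvDl.
case: (eqVneq w 0) => [w0 | wn0].
  have e : dotv y1 (x0 - x1) = dotv pg (x0 - x1).
    have := dw (x0 - x1); rewrite w0 dotvC dotv0r => h.
    have : 0 = dotv y1 (x0 - x1) - dotv pg (x0 - x1).
      by rewrite -[RHS]mul1r -(@mulfV _ 2) // -mulrA -h mulr0.
    lra.
  have cx0 : closure Om x0 by exact: subset_closure.
  have hG := @Gamma_ge _ _ Om v x0 y1 (v x1 - dotv y1 x1) cx0.
  have : parab (- 0) y1 (v x1 - dotv y1 x1) x0 <= Gamma_env Om 0 v x0.
    apply: hG => z zc; rewrite parab0.
    have := Hy1 z zc; rewrite dotvBr; lra.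
  rewrite parab0 -PGx0.
  have := Pform x0; have := sqnorm_ge0 (x0 - x1).
  have : 0 <= a / 2 * sqnorm (x0 - x1) by apply: mulr_ge0; [rewrite divr_ge0 // ltW | exact: sqnorm_ge0].
  rewrite dotvBr in e; lra.
apply: (@visc_contra R n Om L K a v x1 m w Ox1 L1 a0 wn0 visc) => c c0 z zc.
have h1 := Hy1 z zc.
have h2 := Pv z zc; rewrite /= Pform in h2.
have hg := g_le (dotv w (z - x1)) c0.
have hS : 0 <= a / 2 * sqnorm (z - x1) by apply: mulr_ge0; [rewrite divr_ge0 // ltW | exact: sqnorm_ge0].
rewrite /phi /sf dm.
have hX := dw (z - x1).
move: hg hX; move: (dotv w (z - x1)) => X.
move: (c * X ^+ 2) (c ^+ 3 * X ^+ 4) => C1 C3 hg hX.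
move: (dotv y1 (z - x1)) (dotv pg (z - x1)) (a / 2 * sqnorm (z - x1)) h1 h2 hS hX
  => D1 Dp S h1 h2 hS hX.
case: (leP 0 X) => s0.
  rewrite ger0_norm // in hg; lra.
rewrite ltr0_norm // in hg; lra.
Qed.
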